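(* There exists a compact, countably infinite topological space $(T,\tau)$ which is not the continuous image of Cantor's ternary set $C$; that is, there is no continuous surjection $f\colon C \to T$.
   Context: Cantor's ternary set is $C = \left\{ \sum_{n \in \mathbb{N}} \frac{\omega_n}{3^n} : \omega_n \in \{0,2\} \text{ for all } n \in \mathbb{N}\right\}$, equipped with the subspace topology induced by the Euclidean metric on $\mathbb{R}$. A subset $A$ of a topological space is called compact if every collection of open sets whose union contains $A$ has a finite subcollection whose union contains $A$; compactness does not presuppose the Hausdorff property. *)

(* Defs.v *)
From HB Require Import structures.
From mathcomp Require Import all_boot all_order all_algebra.
From mathcomp Require Import all_classical all_reals all_analysis.
Set Implicit Arguments. Unset Strict Implicit. Unset Printing Implicit Defensive.
Import Order.TTheory GRing.Theory Num.Theory.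
Import numFieldNormedType.Exports.
Local Open Scope classical_set_scope.
Local Open Scope ring_scope.

(* Cantor's ternary set C = { sum_{n>=1} w_n / 3^n : w_n in {0,2} } as a
   subset of the reals R (digits indexed from 1, i.e. w k / 3^(k+1), k >= 0). *)
Definition cantor_ternary (R : realType) : set R :=
  [set x | exists w : nat -> R, (forall n, w n = 0 \/ w n = 2) /\
     (series (fun k => w k / 3 ^+ k.+1)) @ \oo --> x].
Arguments cantor_ternary R : clear implicits.

(* Main.v *)
Require Import Defs.
From HB Require Import structures.
From mathcomp Require Import all_boot all_order all_algebra.
From mathcomp Require Import all_classical all_reals all_analysis.
Set Implicit Arguments. Unset Strict Implicit. Unset Printing Implicit Defensive.
Import Order.TTheory GRing.Theory Num.Theory.
Import numFieldNormedType.Exports.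
Local Open Scope classical_set_scope.
Local Open Scope ring_scope.
From mathcomp Require Import ring lra.

Definition TT := ((nat * nat) + bool)%type.
HB.instance Definition _ := Countable.on TT.

Definition Topen (U : set TT) : Prop :=
  (U (inr true) -> exists n, forall i j, (n <= i)%N -> U (inl (i,j))) /\
  (U (inr false) -> forall i, exists n, forall j, (n <= j)%N -> U (inl (i,j))).

Lemma TopenT : Topen setT.
Proof. by split=> _; [exists 0%N | move=> i; exists 0%N]. Qed.

Lemma TopenI : setI_closed Topen.
Proof.
move=> A B [A1 A2] [B1 B2]; split.
  move=> [/A1 [n Hn] /B1 [m Hm]]; exists (maxn n m) => i j le.
  by split; [apply: Hn | apply: Hm]; apply: leq_trans le; rewrite ?leq_maxl ?leq_maxr.
move=> [/A2 Ha /B2 Hb] i; have [n Hn] := Ha i; have [m Hm] := Hb i.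
exists (maxn n m) => j le.
by split; [apply: Hn | apply: Hm]; apply: leq_trans le; rewrite ?leq_maxl ?leq_maxr.
Qed.

Lemma TopenU (I : Type) (f : I -> set TT) : (forall i, Topen (f i)) ->
  Topen (\bigcup_i f i).
Proof.
move=> H; split.
  move=> [k _ /(proj1 (H k)) [n Hn]]; exists n => i j le; exists k => //; exact: Hn.
move=> [k _ /(proj2 (H k)) Hn] i; have [n Hm] := Hn i.
by exists n => j le; exists k => //; exact: Hm.
Qed.

HB.instance Definition _ := isOpenTopological.Build TT TopenT TopenI TopenU.

Lemma nbhsTT (p : TT) (A : set TT) : nbhs p A -> exists B, [/\ Topen B, B p & B `<=` A].
Proof. move=> H. rewrite /nbhs /= in H. by hnf in H. Qed.

Lemma Topen_nbhs (p : TT) (A : set TT) : Topen A -> A p -> nbhs p A.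
Proof. move=> oA Ap; rewrite /nbhs /=. by exists A; split. Qed.

Lemma not_cluster (F : set_system TT) p : ~ cluster F p ->
  exists A B, [/\ F A, nbhs p B & A `&` B = set0].
Proof.
move=> H; apply: contrapT => H2; apply: H => A B FA nB.
apply: contrapT => H3; apply: H2; exists A, B; split=> //.
by apply/seteqP; split=> x // Hx; exfalso; apply: H3; exists x.
Qed.

Lemma TT_compact : compact [set: TT].
Proof.
move=> F FF _.
have [c1|/not_cluster [A1 [B1 [FA1 /nbhsTT [U1 [[oU1 _] U1p U1B] AB1]]]]] :=
  pselect (cluster F (inr true)); first by exists (inr true).
have [c2|/not_cluster [A2 [B2 [FA2 /nbhsTT [U2 [[_ oU2] U2p U2B] AB2]]]]] :=
  pselect (cluster F (inr false)); first by exists (inr false).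
have [n Hn] := oU1 U1p.
have /choice [g Hg] := oU2 U2p.
pose S := (fun ij : nat * nat => (inl ij : TT)) @`
  ([set i | (i < n)%N] `*`` (fun i => [set j | (j < g i)%N])).
have finS : finite_set S.
  apply: finite_image; apply: finite_setXR; first exact: finite_II.
  by move=> x _; exact: finite_II.
have FS : F S.
  apply: filterS (filterI FA1 FA2) => -[[i j]|b] [A1x A2x].
  - exists (i, j) => //; split => /=.
      rewrite ltnNge; apply/negP => le.
      have : (A1 `&` B1) (inl (i, j)) by split => //; apply: U1B; exact: Hn.
      by rewrite AB1.
    rewrite ltnNge; apply/negP => le.
    have : (A2 `&` B2) (inl (i, j)) by split => //; apply: U2B; exact: Hg.
    by rewrite AB2.
  - case: b A1x A2x => A1x A2x.
      have : (A1 `&` B1) (inr true) by split => //; exact: U1B.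
      by rewrite AB1.
    have : (A2 `&` B2) (inr false) by split => //; exact: U2B.
    by rewrite AB2.
have [p [_ cp]] := finite_compact finS FF FS.
by exists p.
Qed.

Lemma TT_countable : countable [set: TT].
Proof. exact: countableP. Qed.

Lemma TT_infinite : infinite_set [set: TT].
Proof.
move=> fin; apply: infinite_nat.
have inj : {in (fun n : nat => (inl (n, 0%N) : TT)) @^-1` setT &, injective (fun n : nat => (inl (n, 0%N) : TT))}.
  by move=> x y _ _ [].
by have := finite_preimage inj fin; rewrite preimage_setT.
Qed.

Section Cant.
Variable R : realType.

Definition e3 (k : nat) : R := 2 / 3 ^+ k.+1.
Definition dig (b : nat -> bool) (k : nat) : R := if b k then e3 k else 0.

Lemma e3_ge0 k : 0 <= e3 k.
Proof. by rewrite /e3 divr_ge0 // exprn_ge0. Qed.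

Lemma geo N n :
  \sum_(0 <= k < n) (if (N <= k)%N then e3 k else 0) =
  (3 ^+ N)^-1 - (3 ^+ (maxn N n))^-1.
Proof.
elim: n => [|n IH]; first by rewrite big_geq // maxn0 subrr.
rewrite big_nat_recr //= IH.
case: (leqP N n) => Nn.
  rewrite (maxn_idPr (leq_trans Nn (leqnSn n))) /e3.
  rewrite exprS.
  have h3 : (3 : R) != 0 by rewrite pnatr_eq0.
  have hn : (3 ^+ n : R) != 0 by rewrite expf_neq0.
  by field; rewrite hn expf_neq0.
by rewrite (maxn_idPl (Nn : (n.+1 <= N)%N)) addr0.
Qed.

Lemma dig_ge0 b k : 0 <= dig b k.
Proof. by rewrite /dig; case: ifP => _ //; exact: e3_ge0. Qed.

Lemma dig_le b k : dig b k <= e3 k.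
Proof. by rewrite /dig; case: ifP => _ //; exact: e3_ge0. Qed.

Lemma series_dig_cvg b : cvgn (series (dig b)).
Proof.
apply: nondecreasing_is_cvgn.
  apply/nondecreasing_seqP => n; rewrite seriesSr lerDl; exact: dig_ge0.
exists 1 => _ [n _ <-].
apply: (@le_trans _ _ (\sum_(0 <= k < n) (if (0 <= k)%N then e3 k else 0))).
  by apply: ler_sum => k _; exact: dig_le.
rewrite (geo 0 n) expr0 invr1 lerBlDr lerDl invr_ge0 exprn_ge0 //.
Qed.

Definition phi (b : cantor_space) : R := limn (series (dig b)).

Lemma phi_cvg b : series (dig b) @ \oo --> phi b.
Proof. exact: series_dig_cvg. Qed.


Lemma phi_close b b' N : (forall k, (k < N)%N -> b' k = b k) ->
  `|phi b - phi b'| <= (3 ^+ N)^-1.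
Proof.
move=> agree.
have c : (fun n => `|series (dig b) n - series (dig b') n|) @ \oo --> `|phi b - phi b'|.
  by apply: cvg_norm; apply: cvgB; exact: phi_cvg.
rewrite -(cvg_lim _ c) //. have L := @limr_le nat \oo _ R ((3 ^+ N)^-1) (fun n => `|series (dig b) n - series (dig b') n|). apply: L; first exact: (cvgP _ c).
near=> n.
rewrite /series /= -sumrB.
apply: (le_trans (ler_norm_sum _ _ _)).
apply: (@le_trans _ _ (\sum_(0 <= k < n) (if (N <= k)%N then e3 k else 0))).
  apply: ler_sum => k _; case: (leqP N k) => Nk.
    rewrite /dig; case: (b k); case: (b' k); rewrite ?subrr ?normr0 ?e3_ge0 //.
      by rewrite subr0 ger0_norm // e3_ge0.
    by rewrite sub0r normrN ger0_norm // e3_ge0.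
  by rewrite /dig agree // subrr normr0.
rewrite (geo N n) lerBlDr lerDl invr_ge0 exprn_ge0 //.
Unshelve. all: by end_near.
Qed.

Lemma nbhs_agree (b : cantor_space) N :
  nbhs b [set b' : cantor_space | forall k, (k < N)%N -> b' k = b k].
Proof.
elim: N => [|N IH]; first exact: filterS filterT.
have h : nbhs b [set b' : cantor_space | b' N = b N].
  by have := @proj_continuous nat (fun _ => bool) N b; move=> /(_ _ (@discrete_set1 bool (b N))). 
apply: filterS (filterI IH h) => b' [H1 H2] k; rewrite ltnS leq_eqVlt.
by case/orP => [/eqP -> //|]; exact: H1.
Qed.

Lemma small_pow (e : R) : 0 < e -> exists N, (3 ^+ N)^-1 < e.
Proof.
move=> e0; exists (Num.bound e^-1).
have ie : 0 <= e^-1 by rewrite invr_ge0 ltW.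
have h := archi_boundP ie.
have h2 : ((Num.bound e^-1)%:R : R) <= 3 ^+ Num.bound e^-1.
  by rewrite -natrX ler_nat ltnW // ltn_expl.
rewrite -[e]invrK ltf_pV2 ?posrE ?exprn_gt0 ?invr_gt0 //.
rewrite invrK; exact: lt_le_trans h h2.
Qed.

Lemma phi_continuous : continuous phi.
Proof.
move=> b; apply/cvgrPdist_lt => e e0.
have [N HN] := small_pow e0.
apply: filterS (nbhs_agree b N) => b' H.
exact: le_lt_trans (phi_close H) HN.
Qed.


Lemma cantor_eq : cantor_ternary R = phi @` setT.
Proof.
apply/seteqP; split => x.
  move=> [w [Hw cw]]; exists (fun k => w k == 2) => //. rewrite /phi.
  rewrite (_ : dig _ = (fun k => w k / 3 ^+ k.+1)); last first.
    apply/funext => k; rewrite /dig /e3.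
    case: (Hw k) => ->; last by rewrite eqxx.
    by rewrite (_ : (0 : R) == 2 = false) ?mul0r //; apply/negbTE; rewrite eq_sym pnatr_eq0.
  exact: cvg_lim cw.
move=> [b _ <-]; exists (fun k => if b k then 2 else 0); split.
  by move=> n; case: (b n); [right|left].
have -> : (fun k => (if b k then 2 else 0) / 3 ^+ k.+1) = dig b.
  by apply/funext => k; rewrite /dig /e3; case: (b k); rewrite ?mul0r.
exact: phi_cvg.
Qed.

Lemma cantor_compact : compact (cantor_ternary R).
Proof.
rewrite cantor_eq; apply: continuous_compact; last exact: cantor_space_compact.
by apply: continuous_subspaceT; exact: phi_continuous.
Qed.

End Cant.

Section Main.
Variable R : realType.
Let C := cantor_ternary R.

Lemma seq_cluster (u : nat -> R) : (forall n, C (u n)) ->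
  exists2 c, C c & forall e N, 0 < e -> exists2 n, (N <= n)%N & ball c e (u n).
Proof.
move=> Cu.
have FC : (u @ \oo) C by exists 0%N => // n _; exact: Cu.
have [c [Cc cl]] := @cantor_compact R (u @ \oo) _ FC.
exists c => // e N e0.
have FA : (u @ \oo) (u @` [set n | (N <= n)%N]).
  by apply: filterS (nbhs_infty_ge N) => n Nn; exists n.
have [_ [[n Nn <-] H]] := cl _ _ FA (nbhsx_ballx c e e0).
by exists n.
Qed.

Lemma cont_ball (f : R -> TT) (c : R) (V : set TT) :
  {within C, continuous f} -> C c -> Topen V -> V (f c) ->
  exists2 e, 0 < e & forall y, C y -> ball c e y -> V (f y).
Proof.
move=> /subspace_continuousP fc Cc oV Vfc.
have := fc c Cc V (Topen_nbhs oV Vfc).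
rewrite /= nbhs_simpl /= => /nbhs_ballP [e e0 H].
by exists e => // y Cy /H; apply.
Qed.

Lemma Topen1 i j : Topen [set (inl (i, j) : TT)].
Proof. by split => /= H; discriminate H. Qed.

Lemma no_image (f : R -> TT) : {within C, continuous f} -> f @` C = setT -> False.
Proof.
move=> fc fs.
have pre_ex : forall y : TT, exists c, C c /\ f c = y.
  move=> y; have : (f @` C) y by rewrite fs.
  by move=> [c Cc <-]; exists c.
have /choice [pre Hpre] := pre_ex.
pose u k j := pre (inl (k, j)).
have Cu k j : C (u k j) by case: (Hpre (inl (k, j))).
have fu k j : f (u k j) = inl (k, j) by case: (Hpre (inl (k, j))).
have clk : forall k, exists c, C c /\ forall e N, 0 < e -> exists2 n, (N <= n)%N & ball c e (u k n).
  by move=> k; have [c Cc H] := seq_cluster (Cu k); exists c.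
have /choice [cc Hcc] := clk.
have Ccc k : C (cc k) by case: (Hcc k).
have fcc k : f (cc k) = inr false.
  have [_ cl] := Hcc k.
  case E : (f (cc k)) => [[i j0]|[]] //.
  - have [e e0 H] := cont_ball fc (Ccc k) (Topen1 i j0) E.
    have [n lt bn] := cl e j0.+1 e0.
    have := H _ (Cu k n) bn; rewrite fu => -[_ nj].
    by move: lt; rewrite nj ltnn.
  - pose V := [set p : TT | p = inr true \/ exists i j, p = inl (i, j) /\ (k < i)%N].
    have oV : Topen V.
      split => [_|[|[i [j []]]] //].
      by exists k.+1 => i j le; right; exists i, j.
    have [e e0 H] := cont_ball fc (Ccc k) oV (or_introl E).
    have [n _ bn] := cl e 0%N e0.
    have := H _ (Cu k n) bn; rewrite fu => -[//|[i [j [[<- _]]]]].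
    by rewrite ltnn.
have [c Cc clc] := seq_cluster Ccc.
have fc2 : f c = inr false.
  case E : (f c) => [[i j0]|[]] //.
  - have [e e0 H] := cont_ball fc Cc (Topen1 i j0) E.
    have [n _ bn] := clc e 0%N e0.
    by have := H _ (Ccc n) bn; rewrite fcc.
  - pose V := [set p : TT | p <> inr false].
    have oV : Topen V.
      by split => [_|//]; exists 0%N => i j _.
    have Vfc : V (f c) by rewrite /V /= E.
    have [e e0 H] := cont_ball fc Cc oV Vfc.
    have [n _ bn] := clc e 0%N e0.
    by have := H _ (Ccc n) bn; rewrite fcc.
have jex : forall k, exists j, ball (cc k) ((3 ^+ k)^-1) (u k j).
  move=> k; have [_ cl] := Hcc k.
  have p3 : 0 < (3 ^+ k : R)^-1 by rewrite invr_gt0 exprn_gt0.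
  have [n _ bn] := cl ((3 ^+ k)^-1) 0%N p3.
  by exists n.
have /choice [jf Hjf] := jex.
pose V := [set p : TT | p = inr false \/ exists i j, p = inl (i, j) /\ (jf i < j)%N].
have oV : Topen V.
  split => [[//|[i [j []]]] //|_ i].
  by exists (jf i).+1 => j le; right; exists i, j.
have [e e0 H] := cont_ball fc Cc oV (or_introl fc2).
have e20 : 0 < e / 2 by rewrite divr_gt0.
have [K HK] := small_pow e20.
have [k Kk bk] := clc (e / 2) K e20.
have b1 : ball (cc k) (e / 2) (u k (jf k)).
  apply: le_ball (Hjf k); apply: ltW; apply: le_lt_trans HK.
  by rewrite lef_pV2 ?posrE ?exprn_gt0 // ler_eXn2l // ltr1n.
have bu : ball c e (u k (jf k)).
  by rewrite [e]splitr; exact: ball_triangle bk b1.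
have := H _ (Cu k (jf k)) bu.
rewrite fu => -[//|[i [j [[<- <-]]]]].
by rewrite ltnn.
Qed.
End Main.

Unset Implicit Arguments. Set Strict Implicit.

Theorem theorem1 (R : realType) :
  exists T : topologicalType,
    [/\ compact [set: T], countable [set: T], infinite_set [set: T] &
      ~ (exists f : R -> T,
           {within (cantor_ternary R), continuous f} /\
           f @` (cantor_ternary R) = [set: T])].
Proof.
exists TT; split.
- exact: TT_compact.
- exact: TT_countable.
- exact: TT_infinite.
- by move=> [f [fc fs]]; exact: (no_image fc fs).
Qed.
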